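(* Let $0\le\alpha\le1$ and let $f,g$ be infinitely differentiable functions (on a domain containing $[0,\infty)$ and the range of $g$ respectively) with $f(g(0))=0$, such that all series below converge absolutely and may be rearranged. For real $\beta$ define $$D_x^{\beta}[h](x)=\sum_{k=0}^{\infty}\frac{\sin[\pi(\beta-k)]}{\pi(\beta-k)}\,\frac{\Gamma(\beta+1)}{\Gamma(k+1)}\,x^{k-\beta}\,\frac{d^k}{dx^k}\big[h(x)-h(0)\big],\qquad x>0,$$ with $\frac{\sin[\pi(\beta-k)]}{\pi(\beta-k)}:=1$ when $\beta=k$. For each integer $m\ge0$ define the differential operator (normal-ordered hypergeometric function) $$:{}_2F_2:\left[\begin{matrix}1,\ m-\alpha\\ 1+m,\ 1+m-\alpha\end{matrix};-x\frac{d}{dx}\right]:=\sum_{k=0}^{\infty}\frac{(1)_k\,(m-\alpha)_k}{(1+m)_k\,(1+m-\alpha)_k\,k!}\,(-1)^k\,x^k\frac{d^k}{dx^k},$$ where $(a)_k$ is the Pochhammer symbol, and the weight $$W_m(\alpha,x,g(x))=\sum_{j=0}^{m}\frac{(-1)^j}{m!}\binom{m}{j}\,g(x)^j\;:{}_2F_2:\left[\begin{matrix}1,\ m-\alpha\\ 1+m,\ 1+m-\alpha\end{matrix};-x\frac{d}{dx}\right]\frac{d^m}{dx^m}\big(g(x)^{m-j}\big),$$ where the operator acts only on $\frac{d^m}{dx^m}(g(x)^{m-j})$. Then for $x>0$, $$D_x^{\alpha}[f(g(x))]=\sum_{m=0}^{\infty}W_m(\alpha,x,g(x))\,\frac{\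sin[\pi(\alpha-m)]}{\pi(\alpha-m)}\,\frac{\Gamma(\alpha+1)}{\Gamma(m+1)}\,x^{m-\alpha}\,f^{(m)}(g(x)).$$
   Context: For $0\le\alpha\le1$ the series operator $D_x^\alpha$ is the expansion the paper uses for the Caputo fractional derivative ${}^C D_x^\alpha f(x)=\frac{1}{\Gamma(1-\alpha)}\int_0^x (x-t)^{-\alpha} f'(t)\,dt$, $x>0$. The paper adopts the convention of replacing every function $h$ by $h(x)-h(0)$, i.e. functions being differentiated are taken to vanish at the origin. *)

(* Defs.v *)
From Stdlib Require Import Reals Factorial Binomial.
From Coquelicot Require Import Coquelicot.
Open Scope R_scope.

Definition Gamma (s : R) : R :=
  RInt_gen (fun t => Rpower t (s - 1) * exp (- t)) (at_right 0) (Rbar_locally p_infty).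

Definition sincpi (t : R) : R :=
  if Req_EM_T t 0 then 1 else sin (PI * t) / (PI * t).

Definition Dfrac_term (beta : R) (h : R -> R) (x : R) (k : nat) : R :=
  sincpi (beta - INR k) * Gamma (beta + 1) / Gamma (INR k + 1)
  * Rpower x (INR k - beta) * Derive_n (fun y => h y - h 0) k x.

Definition Dfrac (beta : R) (h : R -> R) (x : R) : R := Series (Dfrac_term beta h x).

Fixpoint poch (a : R) (k : nat) : R :=
  match k with
  | O => 1
  | S k' => poch a k' * (a + INR k')
  end.

Definition F22_term (alpha : R) (m : nat) (u : R -> R) (x : R) (k : nat) : R :=
  poch 1 k * poch (INR m - alpha) k
  / (poch (1 + INR m) k * poch (1 + INR m - alpha) k * INR (fact k))
  * (-1) ^ k * x ^ k * Derive_n u k x.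

Definition F22op (alpha : R) (m : nat) (u : R -> R) (x : R) : R :=
  Series (F22_term alpha m u x).

Definition dm_gpow (g : R -> R) (m j : nat) : R -> R :=
  Derive_n (fun y => g y ^ (m - j)) m.

Definition W (alpha : R) (g : R -> R) (m : nat) (x : R) : R :=
  sum_f_R0 (fun j => (-1) ^ j / INR (fact m) * Binomial.C m j * g x ^ j
                     * F22op alpha m (dm_gpow g m j) x) m.

Definition rhs_term (alpha : R) (f g : R -> R) (x : R) (m : nat) : R :=
  W alpha g m x * sincpi (alpha - INR m) * Gamma (alpha + 1) / Gamma (INR m + 1)
  * Rpower x (INR m - alpha) * Derive_n f m (g x).

(* (m,k)-th term of the right-hand side with the operator series expanded;
   rhs_term m = sum_k rhs_term2 m k (when the inner series converge). *)
Definition rhs_term2 (alpha : R) (f g : R -> R) (x : R) (m k : nat) : R :=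
  sum_f_R0 (fun j => (-1) ^ j / INR (fact m) * Binomial.C m j * g x ^ j
                     * F22_term alpha m (dm_gpow g m j) x k) m
  * sincpi (alpha - INR m) * Gamma (alpha + 1) / Gamma (INR m + 1)
  * Rpower x (INR m - alpha) * Derive_n f m (g x).

(* Main.v *)
Require Import Defs.
From Stdlib Require Import Reals Lra Lia Factorial Binomial.
From Coquelicot Require Import Coquelicot.
Open Scope R_scope.


Lemma isd_plus f g x a b : is_derive f x a -> is_derive g x b -> is_derive (fun y => f y + g y) x (a + b).
Proof. intros; apply (@is_derive_plus R_AbsRing R_NormedModule f g x a b); auto. Qed.
Lemma isd_mult f g x a b : is_derive f x a -> is_derive g x b -> is_derive (fun y => f y * g y) x (a * g x + f x * b).
Proof. intros; apply (@is_derive_mult R_AbsRing f g x a b); auto. intros; apply Rmult_comm. Qed.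

Definition Sm (n : nat) (h : R -> R) :=
  forall k y, (k <= n)%nat -> 0 < y -> ex_derive_n h k y.
Definition Smooth (h : R -> R) := forall n, Sm n h.

Lemma loc_pos (y : R) : 0 < y -> locally y (fun t => 0 < t).
Proof.
  intros Hy. exists (mkposreal y Hy). intros z Hz.
  unfold ball in Hz; simpl in Hz; unfold AbsRing_ball, abs, minus, plus, opp in Hz; simpl in Hz.
  apply Rabs_lt_between in Hz. lra.
Qed.

Lemma Sm_ext n h1 h2 : (forall y, 0 < y -> h1 y = h2 y) -> Sm n h1 -> Sm n h2.
Proof.
  intros He H k y Hk Hy. apply ex_derive_n_ext_loc with h1; auto.
  apply filter_imp with (fun t => 0 < t); auto. apply loc_pos; auto.
Qed.

Lemma Sm_0 h : Sm 0 h.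
Proof. intros k y Hk _. assert (k = 0%nat) by lia. subst. simpl. exact I. Qed.

Lemma Sm_le n m h : (m <= n)%nat -> Sm n h -> Sm m h.
Proof. intros Hmn H k y Hk Hy. apply H; auto. lia. Qed.

Lemma Sm_S n h : (forall y, 0 < y -> ex_derive h y) -> Sm n (Derive h) -> Sm (S n) h.
Proof.
  intros H1 H2 k y Hk Hy. destruct k as [|k]. { simpl; exact I. }
  destruct k as [|k]. { simpl. apply H1; auto. }
  specialize (H2 (S k) y ltac:(lia) Hy). simpl in H2 |- *.
  apply ex_derive_ext with (Derive_n (Derive h) k); auto.
  intros t. change (Derive_n (Derive_n h 1) k t = Derive_n h (S k) t).
  rewrite Derive_n_comp, Nat.add_1_r. reflexivity.
Qed.

Lemma Sm_D n h : Sm (S n) h -> Sm n (Derive h).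
Proof.
  intros H k y Hk Hy. destruct k as [|k]. { simpl; exact I. }
  specialize (H (S (S k)) y ltac:(lia) Hy). simpl in H |- *.
  apply ex_derive_ext with (Derive_n h (S k)); auto.
  intros t. change (Derive_n h (S k) t = Derive_n (Derive_n h 1) k t).
  rewrite Derive_n_comp, Nat.add_1_r. reflexivity.
Qed.

Lemma Sm_ex n h : Sm (S n) h -> forall y, 0 < y -> ex_derive h y.
Proof. intros H y Hy. exact (H 1%nat y ltac:(lia) Hy). Qed.

Lemma Sm_step n H H' : (forall y, 0 < y -> is_derive H y (H' y)) -> Sm n H' -> Sm (S n) H.
Proof.
  intros Hd HS. apply Sm_S.
  - intros y Hy. eexists. apply Hd; auto.
  - apply Sm_ext with H'; auto. intros y Hy. symmetry. apply is_derive_unique. auto.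
Qed.

Lemma Sm_const n c : Sm n (fun _ => c).
Proof.
  revert c; induction n as [|n IH]; intros c. apply Sm_0.
  apply Sm_step with (fun _ => 0). intros; apply (is_derive_const c).
  apply IH.
Qed.

Lemma Sm_plus n : forall h1 h2, Sm n h1 -> Sm n h2 -> Sm n (fun y => h1 y + h2 y).
Proof.
  induction n as [|n IH]; intros h1 h2 H1 H2. apply Sm_0.
  apply Sm_step with (fun y => Derive h1 y + Derive h2 y).
  - intros y Hy. apply isd_plus; apply Derive_correct.
    apply (Sm_ex n h1 H1 y Hy). apply (Sm_ex n h2 H2 y Hy).
  - apply IH; apply Sm_D; auto.
Qed.

Lemma Sm_mult n : forall h1 h2, Sm n h1 -> Sm n h2 -> Sm n (fun y => h1 y * h2 y).
Proof.
  induction n as [|n IH]; intros h1 h2 H1 H2. apply Sm_0.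
  apply Sm_step with (fun y => Derive h1 y * h2 y + h1 y * Derive h2 y).
  - intros y Hy. apply isd_mult.
    apply Derive_correct, (Sm_ex n h1 H1 y Hy). apply Derive_correct, (Sm_ex n h2 H2 y Hy).
  - apply (Sm_plus n (fun y => Derive h1 y * h2 y) (fun y => h1 y * Derive h2 y)).
    + apply (IH (Derive h1) h2). apply (Sm_D n h1 H1). apply (Sm_le (S n) n h2); [lia | exact H2].
    + apply (IH h1 (Derive h2)). apply (Sm_le (S n) n h1); [lia | exact H1]. apply (Sm_D n h2 H2).
Qed.

Lemma Smooth_Derive_n h k : Smooth h -> Smooth (Derive_n h k).
Proof.
  intros H. induction k as [|k IH]. exact H.
  intros n. apply (Sm_D n (Derive_n h k)). apply IH.
Qed.

Lemma Smooth_pow g p : Smooth g -> Smooth (fun z => g z ^ p).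
Proof.
  intros Hg n. induction p as [|p IH]. apply (Sm_const n 1).
  apply (Sm_mult n g (fun z => g z ^ p)); auto.
Qed.

Lemma Sm_comp (f g : R -> R) :
  Smooth g -> (forall n y, 0 < y -> ex_derive_n f n (g y)) ->
  forall n m, Sm n (fun y => Derive_n f m (g y)).
Proof.
  intros Hg Hf n. induction n as [|n IH]; intros m. apply Sm_0.
  apply Sm_step with (fun y => Derive_n f (S m) (g y) * Derive g y).
  - intros y Hy.
    assert (H1 : is_derive (Derive_n f m) (g y) (Derive_n f (S m) (g y))).
    { apply (Derive_correct (Derive_n f m) (g y)). exact (Hf (S m) y Hy). }
    assert (H2 : is_derive g y (Derive g y)).
    { apply Derive_correct. exact (Sm_ex 0 g (Hg 1%nat) y Hy). }
    pose proof (is_derive_comp (Derive_n f m) g y _ _ H1 H2) as H3.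
    replace (Derive_n f (S m) (g y) * Derive g y) with (scal (Derive g y) (Derive_n f (S m) (g y))).
    exact H3. unfold scal; simpl; unfold mult; simpl; ring.
  - apply (Sm_mult n (fun y => Derive_n f (S m) (g y)) (Derive g)).
    apply IH. apply (Sm_D n g (Hg (S n))).
Qed.


Definition Bk (g : R -> R) (k m : nat) (y : R) : R :=
  sum_f_R0 (fun j => (-1) ^ j / INR (fact m) * Binomial.C m j * g y ^ j
                     * Derive_n (fun z => g z ^ (m - j)) k y) m.

Definition bprev (g : R -> R) (k m : nat) (y : R) : R :=
  match m with O => 0 | S m' => Bk g k m' y end.

Lemma is_derive_sum (h : nat -> R -> R) (d : nat -> R) (n : nat) (y : R) :
  (forall i, (i <= n)%nat -> is_derive (h i) y (d i)) ->
  is_derive (fun z => sum_f_R0 (fun i => h i z) n) y (sum_f_R0 d n).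
Proof.
  induction n as [|n IH]; intros H.
  - simpl. apply H. lia.
  - simpl. apply isd_plus. apply IH. intros; apply H; lia. apply H; lia.
Qed.

Lemma C_id (m i : nat) : (i <= m)%nat ->
  Binomial.C (S m) (S i) * INR (S i) / INR (fact (S m)) = Binomial.C m i / INR (fact m).
Proof.
  intros Hi. unfold Binomial.C. simpl minus.
  rewrite (fact_simpl i).
  rewrite mult_INR.
  pose proof (INR_fact_neq_0 i). pose proof (INR_fact_neq_0 m).
  pose proof (INR_fact_neq_0 (S m)). pose proof (INR_fact_neq_0 (m - i)).
  assert (INR (S i) <> 0) by (apply not_0_INR; lia).
  replace (S m - S i)%nat with (m - i)%nat by lia.
  field. repeat split; auto.
Qed.

Lemma B_rec (g : R -> R) (k m : nat) (y : R) : Smooth g -> 0 < y ->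
  is_derive (Bk g k m) y (Bk g (S k) m y - Derive g y * bprev g k m y).
Proof.
  intros Hg Hy.
  set (c := fun j => (-1) ^ j / INR (fact m) * Binomial.C m j).
  set (D := fun j k' => Derive_n (fun z => g z ^ (m - j)) k').
  assert (Hg' : is_derive g y (Derive g y)).
  { apply Derive_correct. exact (Sm_ex 0 g (Hg 1%nat) y Hy). }
  eapply is_derive_ext.
  { intros t. reflexivity. }
  unfold Bk at 1.
  apply is_derive_ext with (fun z => sum_f_R0 (fun j => (c j * g z ^ j) * D j k z) m).
  { intros t. apply sum_eq. intros i _. unfold c, D. reflexivity. }
  replace (Bk g (S k) m y - Derive g y * bprev g k m y) with
    (sum_f_R0 (fun j => (c j * (INR j * Derive g y * g y ^ pred j)) * D j k y
                        + (c j * g y ^ j) * D j (S k) y) m).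
  - apply is_derive_sum. intros j Hj.
    apply (isd_mult (fun z => c j * g z ^ j) (D j k)).
    + apply is_derive_scal. apply is_derive_pow. exact Hg'.
    + apply Derive_correct. unfold D.
      exact (Smooth_pow g (m - j) Hg (S k) (S k) y (le_n _) Hy).
  - rewrite plus_sum.
    assert (E2 : sum_f_R0 (fun j => c j * g y ^ j * D j (S k) y) m = Bk g (S k) m y).
    { unfold Bk. apply sum_eq. intros i _. unfold c, D. reflexivity. }
    rewrite E2.
    assert (E1 : sum_f_R0 (fun j => c j * (INR j * Derive g y * g y ^ pred j) * D j k y) m
                 = - (Derive g y * bprev g k m y)).
    { destruct m as [|m'].
      - simpl. ring.
      - rewrite decomp_sum by lia. simpl pred.
        replace (c 0%nat * (INR 0 * Derive g y * g y ^ 0) * D 0%nat k y) with 0 by (simpl; ring).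
        rewrite Rplus_0_l. unfold bprev, Bk.
        rewrite Ropp_mult_distr_l, scal_sum.
        apply sum_eq. intros i Hi. unfold c, D.
        change (S m' - S i)%nat with (m' - i)%nat.
        set (X := Derive_n (fun z => g z ^ (m' - i)) k y).
        pose proof (C_id m' i Hi) as HC.
        pose proof (INR_fact_neq_0 (S m')). pose proof (INR_fact_neq_0 m').
        replace ((-1) ^ S i / INR (fact (S m')) * Binomial.C (S m') (S i) *
                 (INR (S i) * Derive g y * g y ^ i) * X) with
          (-1 * (-1) ^ i * (Binomial.C (S m') (S i) * INR (S i) / INR (fact (S m'))) * Derive g y * g y ^ i * X)
          by (simpl; field; auto).
        rewrite HC. field. auto. }
    rewrite E1. ring.
Qed.

Lemma pow_opp (a : R) (j : nat) : (- a) ^ j = (-1) ^ j * a ^ j.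
Proof. replace (- a) with (-1 * a) by ring. apply Rpow_mult_distr. Qed.

Lemma locally_zero_deriv (h : R -> R) (y l : R) : 0 < y ->
  (forall t, 0 < t -> h t = 0) -> is_derive h y l -> l = 0.
Proof.
  intros Hy H0 Hd.
  assert (Hz : is_derive h y 0).
  { apply is_derive_ext_loc with (fun _ => 0).
    - apply filter_imp with (fun t => 0 < t). intros t Ht. symmetry. auto. apply loc_pos; auto.
    - apply (is_derive_const 0). }
  apply is_derive_unique in Hd. apply is_derive_unique in Hz. congruence.
Qed.

Lemma B_zero (g : R -> R) : Smooth g ->
  forall k m y, (k < m)%nat -> 0 < y -> Bk g k m y = 0.
Proof.
  intros Hg k. induction k as [|k IH]; intros m y Hkm Hy.
  - unfold Bk. simpl Derive_n.
    transitivity (/ INR (fact m) * (- g y + g y) ^ m).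
    + rewrite binomial, scal_sum. apply sum_eq. intros j _.
      rewrite pow_opp. unfold Rdiv. ring_simplify.
      replace (g y ^ j * g y ^ (m - j)) with (g y ^ (m - j) * g y ^ j) by ring. ring.
    + replace (- g y + g y) with 0 by ring. rewrite pow_i by lia. ring.
  - destruct m as [|m']. lia.
    pose proof (B_rec g k (S m') y Hg Hy) as Hr.
    apply locally_zero_deriv in Hr; auto.
    + simpl bprev in Hr. rewrite (IH m' y ltac:(lia) Hy) in Hr. rewrite Rmult_0_r, Rminus_0_r in Hr. exact Hr.
    + intros t Ht. apply IH; auto. lia.
Qed.

Lemma B_shift (g : R -> R) k m y : Smooth g -> (k < m)%nat -> 0 < y ->
  Bk g (S k) m y = Derive g y * bprev g k m y.
Proof.
  intros Hg Hkm Hy.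
  pose proof (B_rec g k m y Hg Hy) as Hr.
  apply locally_zero_deriv in Hr; auto. lra.
  intros t Ht. apply B_zero; auto.
Qed.

Lemma telescope (w : nat -> R) (n : nat) :
  sum_f_R0 (fun m => w (S m) - w m) n = w (S n) - w 0%nat.
Proof. induction n as [|n IH]; simpl; [ring | rewrite IH; ring]. Qed.

Lemma FdB (f g : R -> R) : Smooth g -> (forall n y, 0 < y -> ex_derive_n f n (g y)) ->
  forall K y, 0 < y ->
  Derive_n (fun z => f (g z)) K y = sum_f_R0 (fun m => Derive_n f m (g y) * Bk g K m y) K.
Proof.
  intros Hg Hf K. induction K as [|K IH]; intros y Hy.
  - simpl. unfold Bk. simpl. unfold Binomial.C. simpl. field.
  - change (Derive_n (fun z => f (g z)) (S K) y) with (Derive (Derive_n (fun z => f (g z)) K) y).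
    apply is_derive_unique.
    apply is_derive_ext_loc with (fun z => sum_f_R0 (fun m => Derive_n f m (g z) * Bk g K m z) K).
    { apply filter_imp with (fun t => 0 < t). intros t Ht. symmetry. auto. apply loc_pos; auto. }
    set (w := fun m => Derive_n f m (g y) * Derive g y * bprev g K m y).
    replace (sum_f_R0 (fun m => Derive_n f m (g y) * Bk g (S K) m y) (S K)) with
      (sum_f_R0 (fun m => (Derive_n f (S m) (g y) * Derive g y) * Bk g K m y
          + Derive_n f m (g y) * (Bk g (S K) m y - Derive g y * bprev g K m y)) K).
    + apply is_derive_sum. intros m Hm.
      apply (isd_mult (fun z => Derive_n f m (g z)) (Bk g K m)).
      * assert (H1 : is_derive (Derive_n f m) (g y) (Derive_n f (S m) (g y))).
        { apply (Derive_correct (Derive_n f m) (g y)). exact (Hf (S m) y Hy). }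
        assert (H2 : is_derive g y (Derive g y)).
        { apply Derive_correct. exact (Sm_ex 0 g (Hg 1%nat) y Hy). }
        pose proof (is_derive_comp (Derive_n f m) g y _ _ H1 H2) as H3.
        replace (Derive_n f (S m) (g y) * Derive g y) with (scal (Derive g y) (Derive_n f (S m) (g y))).
        exact H3. unfold scal; simpl; unfold mult; simpl; ring.
      * apply B_rec; auto.
    + transitivity (sum_f_R0 (fun m => (w (S m) - w m) + Derive_n f m (g y) * Bk g (S K) m y) K).
      { apply sum_eq. intros i _. unfold w. simpl bprev. ring. }
      rewrite plus_sum, telescope, tech5.
      unfold w. simpl bprev. rewrite (B_shift g K (S K) y Hg (Nat.lt_succ_diag_r K) Hy).
      simpl bprev. ring.
Qed.


Lemma partial_diff (a : nat -> R) (p r : nat) :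
  Rabs (sum_f_R0 a (p + r) - sum_f_R0 a p) <=
  sum_f_R0 (fun n => Rabs (a n)) (p + r) - sum_f_R0 (fun n => Rabs (a n)) p.
Proof.
  induction r as [|r IH].
  - rewrite Nat.add_0_r. unfold Rminus. rewrite !Rplus_opp_r, Rabs_R0. lra.
  - rewrite Nat.add_succ_r. simpl.
    replace (sum_f_R0 a (p + r) + a (S (p + r)) - sum_f_R0 a p) with
      ((sum_f_R0 a (p + r) - sum_f_R0 a p) + a (S (p + r))) by ring.
    eapply Rle_trans. apply Rabs_triang. lra.
Qed.

Lemma tail_bound (a : nat -> R) (A B : R) :
  infinite_sum a A -> infinite_sum (fun n => Rabs (a n)) B ->
  forall p, Rabs (A - sum_f_R0 a p) <= B - sum_f_R0 (fun n => Rabs (a n)) p.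
Proof.
  intros HA HB p. apply Rle_plus_epsilon. intros eps Heps.
  destruct (HA (eps / 2) ltac:(lra)) as [N1 H1].
  destruct (HB (eps / 2) ltac:(lra)) as [N2 H2].
  set (q := (N1 + N2 + p)%nat).
  specialize (H1 q ltac:(unfold q; lia)). specialize (H2 q ltac:(unfold q; lia)).
  unfold Rdist in H1, H2.
  pose proof (partial_diff a p (N1 + N2)) as Hd.
  replace (p + (N1 + N2))%nat with q in Hd by (unfold q; lia).
  replace (A - sum_f_R0 a p) with (- (sum_f_R0 a q - A) + (sum_f_R0 a q - sum_f_R0 a p)) by ring.
  eapply Rle_trans. apply Rabs_triang. rewrite Rabs_Ropp.
  apply Rabs_def2 in H2. lra.
Qed.

Lemma partial_le (b : nat -> R) (B : R) :
  (forall n, 0 <= b n) -> infinite_sum b B -> forall p, sum_f_R0 b p <= B.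
Proof.
  intros Hb HB p. apply sum_incr; auto.
Qed.

Lemma tail_small (b : nat -> R) (B : R) (d : R) : 0 < d ->
  infinite_sum b B -> exists P, forall p, (P <= p)%nat -> B - sum_f_R0 b p < d.
Proof.
  intros Hd HB. destruct (HB d Hd) as [P HP]. exists P. intros p Hp.
  specialize (HP p Hp). unfold Rdist in HP. apply Rabs_def2 in HP. lra.
Qed.

Lemma tail_small_unif (b : nat -> nat -> R) (B : nat -> R) (d : R) : 0 < d ->
  (forall m, infinite_sum (b m) (B m)) ->
  forall M, exists P, forall m p, (m <= M)%nat -> (P <= p)%nat -> B m - sum_f_R0 (b m) p < d.
Proof.
  intros Hd HB M. induction M as [|M [P IH]].
  - destruct (tail_small (b 0%nat) (B 0%nat) d Hd (HB 0%nat)) as [P HP].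
    exists P. intros m p Hm Hp. assert (m = 0%nat) by lia. subst. auto.
  - destruct (tail_small (b (S M)) (B (S M)) d Hd (HB (S M))) as [P' HP'].
    exists (P + P')%nat. intros m p Hm Hp.
    destruct (Nat.eq_dec m (S M)) as [->|Hne].
    + apply HP'. lia.
    + apply IH; lia.
Qed.

Lemma tri_sum (a : nat -> nat -> R) (N : nat) :
  sum_f_R0 (fun K => sum_f_R0 (fun m => a m (K - m)%nat) K) N =
  sum_f_R0 (fun m => sum_f_R0 (a m) (N - m)) N.
Proof.
  induction N as [|N IH].
  - simpl. reflexivity.
  - rewrite tech5, IH. rewrite tech5.
    replace (S N - S N)%nat with 0%nat by lia. simpl (sum_f_R0 (a (S N)) 0).
    rewrite tech5. replace (S N - S N)%nat with 0%nat by lia.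
    transitivity (sum_f_R0 (fun m => sum_f_R0 (a m) (N - m) + a m (S N - m)%nat) N + a (S N) 0%nat).
    + rewrite plus_sum. ring.
    + f_equal. apply sum_eq. intros m Hm.
      replace (S N - m)%nat with (S (N - m)) by lia. simpl. reflexivity.
Qed.

Lemma diag_sum (a : nat -> nat -> R) (A B : nat -> R) (SA TB : R) :
  (forall m, infinite_sum (a m) (A m)) ->
  (forall m, infinite_sum (fun k => Rabs (a m k)) (B m)) ->
  infinite_sum B TB ->
  infinite_sum A SA ->
  infinite_sum (fun K => sum_f_R0 (fun m => a m (K - m)%nat) K) SA.
Proof.
  intros HA HB HTB HSA eps Heps.
  set (e3 := eps / 3).
  assert (He3 : 0 < e3) by (unfold e3; lra).
  assert (HBpos : forall m, 0 <= B m).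
  { intros m. apply Rle_trans with (sum_f_R0 (fun k => Rabs (a m k)) 0).
    simpl. apply Rabs_pos. apply partial_le; auto. intros; apply Rabs_pos. }
  destruct (tail_small B TB e3 He3 HTB) as [M1 HM1].
  destruct (HSA e3 He3) as [M2 HM2].
  set (M := (M1 + M2)%nat).
  set (dl := e3 / INR (S M)).
  assert (HSM : 0 < INR (S M)) by (apply lt_0_INR; lia).
  assert (Hdl : 0 < dl) by (unfold dl; apply Rdiv_lt_0_compat; lra).
  destruct (tail_small_unif (fun m k => Rabs (a m k)) B dl Hdl HB M) as [P HP].
  exists (S M + P)%nat. intros N HN. unfold Rdist.
  rewrite tri_sum.
  set (r := fun m p => B m - sum_f_R0 (fun k => Rabs (a m k)) p).
  assert (Hr1 : forall m p, Rabs (A m - sum_f_R0 (a m) p) <= r m p).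
  { intros m p. apply tail_bound; auto. }
  assert (Hr2 : forall m p, r m p <= B m).
  { intros m p. unfold r. pose proof (cond_pos_sum (fun k => Rabs (a m k)) p (fun k => Rabs_pos _)). lra. }
  replace (sum_f_R0 (fun m => sum_f_R0 (a m) (N - m)) N - SA) with
    ((sum_f_R0 A N - SA) - sum_f_R0 (fun m => A m - sum_f_R0 (a m) (N - m)) N)
    by (rewrite minus_sum; ring).
  assert (Htri : forall x y, Rabs (x - y) <= Rabs x + Rabs y).
  { intros x y. unfold Rminus. eapply Rle_trans. apply Rabs_triang. rewrite Rabs_Ropp. lra. }
  eapply Rle_lt_trans. apply Htri.
  eapply Rle_lt_trans. apply Rplus_le_compat_l. apply Rsum_abs.
  assert (H1 : Rabs (sum_f_R0 A N - SA) < e3).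
  { apply HM2. unfold M in HN. lia. }
  assert (H2 : sum_f_R0 (fun m => Rabs (A m - sum_f_R0 (a m) (N - m))) N <= e3 + e3).
  { rewrite (tech2 _ M N) by lia.
    apply Rplus_le_compat.
    - apply Rle_trans with (sum_f_R0 (fun _ => dl) M).
      + apply sum_Rle. intros m Hm. eapply Rle_trans. apply Hr1.
        apply Rlt_le. apply HP; lia.
      + rewrite sum_cte. unfold dl. right. field. lra.
    - apply Rle_trans with (sum_f_R0 (fun i => B (S M + i)%nat) (N - S M)).
      + apply sum_Rle. intros i _. eapply Rle_trans. apply Hr1. apply Hr2.
      + pose proof (tech2 B M N ltac:(lia)) as Ht.
        pose proof (partial_le B TB HBpos HTB N).
        pose proof (HM1 M ltac:(unfold M; lia)). lra. }
  unfold e3 in *. lra.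
Qed.


Lemma poch_1 n : poch 1 n = INR (fact n).
Proof.
  induction n as [|n IH]; simpl poch. reflexivity.
  rewrite IH, fact_simpl, mult_INR, S_INR. ring.
Qed.

Lemma poch_fact m n : poch (1 + INR m) n * INR (fact m) = INR (fact (m + n)).
Proof.
  induction n as [|n IH]; simpl poch. rewrite Nat.add_0_r. ring.
  rewrite Nat.add_succ_r, fact_simpl, mult_INR, <- IH, S_INR, plus_INR. ring.
Qed.

Lemma poch_shift c n : poch c n * (c + INR n) = c * poch (c + 1) n.
Proof.
  induction n as [|n IH]; simpl poch. simpl. ring.
  rewrite S_INR.
  replace (poch c n * (c + INR n) * (c + (INR n + 1))) with ((poch c n * (c + INR n)) * (c + (INR n + 1))) by ring.
  rewrite IH. ring.
Qed.

Lemma poch_pos c n : 0 < c -> 0 < poch c n.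
Proof.
  intros Hc. induction n as [|n IH]; simpl poch. lra.
  apply Rmult_lt_0_compat; auto. pose proof (pos_INR n). lra.
Qed.

Lemma poch_0 n : (1 <= n)%nat -> poch 0 n = 0.
Proof.
  intros Hn. destruct n as [|n]. lia. induction n as [|n IH]; simpl poch. simpl. ring.
  simpl poch in IH. rewrite IH by lia. ring.
Qed.

Lemma sin_shift (a : R) (j : nat) : sin (PI * (a - INR j)) = (-1) ^ j * sin (PI * a).
Proof.
  induction j as [|j IH].
  - simpl. rewrite Rminus_0_r. ring.
  - rewrite S_INR. replace (PI * (a - (INR j + 1))) with (PI * (a - INR j) - PI) by ring.
    rewrite sin_minus, sin_PI, cos_PI, IH. simpl. ring.
Qed.

Lemma sincpi_nz (t : R) : t <> 0 -> sincpi t = sin (PI * t) / (PI * t).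
Proof. intros Ht. unfold sincpi. destruct (Req_EM_T t 0); [contradiction | reflexivity]. Qed.

Lemma INR_ge1 (j : nat) : (1 <= j)%nat -> 1 <= INR j.
Proof. intros; apply (le_INR 1 j) in H; simpl in H; lra. Qed.

Definition Qc (alpha x : R) (m n : nat) : R :=
  poch 1 n * poch (INR m - alpha) n
  / (poch (1 + INR m) n * poch (1 + INR m - alpha) n * INR (fact n))
  * (-1) ^ n * x ^ n * sincpi (alpha - INR m) / INR (fact m) * Rpower x (INR m - alpha).

Lemma scalar_id (alpha x : R) (m n : nat) : 0 <= alpha <= 1 -> 0 < x ->
  (m = 0%nat /\ (1 <= n)%nat) \/
  Qc alpha x m n = sincpi (alpha - INR (m + n)) / INR (fact (m + n)) * Rpower x (INR (m + n) - alpha).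
Proof.
  intros Ha Hx.
  assert (HRp : x ^ n * Rpower x (INR m - alpha) = Rpower x (INR (m + n) - alpha)).
  { rewrite <- Rpower_pow by auto. rewrite <- Rpower_plus, plus_INR. f_equal. ring. }
  destruct n as [|n].
  { right. unfold Qc. rewrite Nat.add_0_r. simpl poch. simpl pow. simpl fact. simpl INR. field.
    apply INR_fact_neq_0. }
  destruct (Nat.eq_dec m 0) as [Hm0|Hm0]. { left; split; auto; lia. }
  right.
  assert (Hfm := INR_fact_neq_0 m). assert (Hfn := INR_fact_neq_0 (S n)).
  assert (Hfmn := INR_fact_neq_0 (m + S n)).
  assert (Hm1 : 1 <= INR m) by (apply INR_ge1; lia).
  assert (HK1 : 1 + INR m <= INR (m + S n)) by (rewrite plus_INR, S_INR; pose proof (pos_INR n); lra).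
  assert (Hp1 : 0 < poch (1 + INR m) (S n)) by (apply poch_pos; lra).
  destruct (Req_dec alpha 0) as [Ha0|Ha0].
  {
    subst alpha. unfold Qc.
    rewrite !sincpi_nz by lra. rewrite !sin_shift. rewrite Rmult_0_r, sin_0.
    unfold Rdiv. ring. }
  destruct (Req_dec alpha 1) as [Ha1|Ha1].
  { subst alpha. unfold Qc.
    destruct (Nat.eq_dec m 1) as [->|Hm1'].
    - replace (INR 1 - 1) with 0 by (simpl; ring). rewrite poch_0 by lia.
      rewrite (sincpi_nz (1 - INR (1 + S n))) by lra. rewrite sin_shift.
      rewrite Rmult_1_r, sin_PI. unfold Rdiv. ring.
    - assert (Hm2 : 2 <= INR m).
      { assert (H2m : (2 <= m)%nat) by lia. apply le_INR in H2m. simpl in H2m. lra. }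
      rewrite !sincpi_nz by lra. rewrite !sin_shift. rewrite Rmult_1_r, sin_PI.
      unfold Rdiv. ring. }
  assert (Ha' : 0 < alpha < 1) by lra.
  unfold Qc.
  rewrite !sincpi_nz by lra. rewrite !sin_shift.
  rewrite poch_1.
  rewrite <- (poch_fact m (S n)).
  assert (Hp2 : 0 < poch (1 + INR m - alpha) (S n)) by (apply poch_pos; lra).
  assert (Hsh := poch_shift (INR m - alpha) (S n)).
  replace (INR m - alpha + 1) with (1 + INR m - alpha) in Hsh by ring.
  assert (HmK : INR m - alpha + INR (S n) <> 0) by (rewrite S_INR; pose proof (pos_INR n); lra).
  replace (poch (INR m - alpha) (S n)) with
    ((INR m - alpha) * poch (1 + INR m - alpha) (S n) / (INR m - alpha + INR (S n))).
  2:{ rewrite <- Hsh. field. auto. }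
  rewrite <- HRp. rewrite pow_add, plus_INR.
  pose proof PI_neq0.
  field. repeat split; try lra.
Qed.


Lemma exp_INR_mult (n : nat) (s : R) : exp (INR n * s) = exp s ^ n.
Proof.
  induction n as [|n IH].
  - simpl. rewrite Rmult_0_l, exp_0; reflexivity.
  - rewrite S_INR, Rmult_plus_distr_r, Rmult_1_l, exp_plus, IH. simpl. ring.
Qed.

Lemma pow_exp_bound (k : nat) (t : R) : 0 < t ->
  0 < t ^ k * exp (- t) <= (INR (S k)) ^ (S k) / t.
Proof.
  intros Ht. set (K := INR (S k)).
  assert (HK : 0 < K) by (unfold K; apply lt_0_INR; lia).
  assert (He : (t / K) ^ (S k) <= exp t).
  { replace t with (INR (S k) * (t / K)) at 2 by (unfold K in *; field; lra).
    rewrite exp_INR_mult. apply pow_incr. split.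
    - apply Rlt_le, Rdiv_lt_0_compat; lra.
    - pose proof (exp_ineq1_le (t / K)). lra. }
  split.
  - apply Rmult_lt_0_compat; [apply pow_lt; lra | apply exp_pos].
  - rewrite exp_Ropp. 
    assert (0 < (t / K) ^ S k) by (apply pow_lt, Rdiv_lt_0_compat; lra).
    apply Rle_trans with (t ^ k * / ((t / K) ^ S k)).
    + apply Rmult_le_compat_l; [apply pow_le; lra|].
      apply Rinv_le_contravar; lra.
    + right. unfold Rdiv. rewrite Rpow_mult_distr, pow_inv. simpl. field.
      repeat split; try lra; try (apply pow_nonzero; lra); unfold K in *; lra.
Qed.

Lemma lim_pow_exp (k : nat) : is_lim (fun t => t ^ k * exp (- t)) p_infty 0.
Proof.
  apply is_lim_spec. intros eps.
  set (C := INR (S k) ^ S k).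
  assert (HC : 0 < C) by (apply pow_lt, lt_0_INR; lia).
  exists (C / eps). intros t Ht.
  assert (Ht0 : 0 < t).
  { apply Rlt_trans with (C / eps); auto. apply Rdiv_lt_0_compat; auto. apply cond_pos. }
  destruct (pow_exp_bound k t Ht0) as [H1 H2].
  rewrite Rminus_0_r, Rabs_pos_eq; [|lra].
  apply Rle_lt_trans with (C / t); auto.
  pose proof (cond_pos eps).
  apply Rmult_lt_reg_r with (t / eps).  apply Rdiv_lt_0_compat; lra.
  replace (C / t * (t / eps)) with (C / eps) by (field; lra).
  replace (eps * (t / eps)) with t by (field; lra). lra.
Qed.

Fixpoint Pn (n : nat) (t : R) : R :=
  match n with O => 1 | S k => t ^ (S k) + INR (S k) * Pn k t end.

Lemma Pn_derive (n : nat) (t : R) : is_derive (Pn n) t (Pn n t - t ^ n).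
Proof.
  induction n as [|k IH].
  - simpl. replace (1 - 1) with 0 by ring. apply (is_derive_const 1).
  - apply is_derive_ext with (fun x => x ^ (S k) + INR (S k) * Pn k x).
    { intros; reflexivity. }
    replace (Pn (S k) t - t ^ (S k)) with
      (INR (S k) * 1 * t ^ Init.Nat.pred (S k) + INR (S k) * (Pn k t - t ^ k)).
    2:{ change (Pn (S k) t) with (t ^ (S k) + INR (S k) * Pn k t). simpl pred. ring. }
    apply (is_derive_plus (fun x => x ^ S k) (fun x => INR (S k) * Pn k x)).
    + apply is_derive_pow. apply (is_derive_id t).
    + apply is_derive_scal. exact IH.
Qed.

Definition Fn (n : nat) (t : R) : R := - (exp (- t) * Pn n t).

Lemma is_derive_expm (t : R) : is_derive (fun s => exp (- s)) t (- exp (- t)).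
Proof. auto_derive; auto. ring. Qed.

Lemma Fn_derive (n : nat) (t : R) : is_derive (Fn n) t (t ^ n * exp (- t)).
Proof.
  unfold Fn.
  replace (t ^ n * exp (- t)) with (- ((- exp (- t)) * Pn n t + exp (- t) * (Pn n t - t ^ n))) by ring.
  apply (is_derive_opp (fun s => exp (- s) * Pn n s)).
  apply (is_derive_mult (fun s => exp (- s)) (Pn n)).
  - apply is_derive_expm.
  - apply Pn_derive.
  - intros; apply Rmult_comm.
Qed.

Lemma Fn_lim (n : nat) : is_lim (fun t => exp (- t) * Pn n t) p_infty 0.
Proof.
  induction n as [|k IH].
  - simpl. apply is_lim_ext with (fun t => t ^ 0 * exp (- t)).
    { intros; simpl; ring. }
    apply lim_pow_exp.
  - apply is_lim_ext with (fun t => t ^ S k * exp (- t) + INR (S k) * (exp (- t) * Pn k t)).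
    { intros; simpl; ring. }
    replace 0 with (0 + INR (S k) * 0) by ring.
    apply is_lim_plus'.
    + apply lim_pow_exp.
    + apply (is_lim_scal_l _ (INR (S k)) p_infty 0 IH).
Qed.

Lemma Pn_0 (n : nat) : Pn n 0 = INR (fact n).
Proof.
  induction n as [|k IH]; [reflexivity|].
  change (Pn (S k) 0) with (0 ^ (S k) + INR (S k) * Pn k 0).
  rewrite IH, fact_simpl, mult_INR. simpl. ring.
Qed.

Lemma Gamma_nat (n : nat) : Gamma (INR n + 1) = INR (fact n).
Proof.
  unfold Gamma. apply is_RInt_gen_unique.
  unfold is_RInt_gen.
  apply filterlimi_lim_ext_loc with (fun ab => Fn n (snd ab) - Fn n (fst ab)).
  - apply Filter_prod with (fun a => 0 < a) (fun b => 0 < b).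
    + exists (mkposreal 1 Rlt_0_1). intros y _ Hy. exact Hy.
    + exists 0. intros; assumption.
    + intros a b Ha Hb. simpl.
      apply is_RInt_ext with (fun t => t ^ n * exp (- t)).
      * intros t [Ht1 Ht2]. rewrite <- Rpower_pow.
        -- f_equal. f_equal. ring.
        -- apply Rlt_trans with (Rmin a b); [apply Rmin_glb_lt; auto | exact Ht1].
      * change (Fn n b - Fn n a) with (minus (Fn n b) (Fn n a)).
        apply (is_RInt_derive (Fn n) (fun t => t ^ n * exp (- t))).
        -- intros; apply Fn_derive.
        -- intros t _. apply (@ex_derive_continuous R_AbsRing R_NormedModule).
           eexists. apply (is_derive_mult (fun s => s ^ n) (fun s => exp (- s))).
           ++ apply is_derive_pow, is_derive_id.
           ++ apply is_derive_expm.
           ++ intros; apply Rmult_comm.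
  - apply filterlim_locally. intros eps.
    assert (He2 : 0 < eps / 2) by (pose proof (cond_pos eps); lra).
    destruct (proj2 (is_lim_spec _ _ _) (Fn_lim n) (mkposreal _ He2)) as [M HM].
    assert (Hc : continuous (Fn n) 0) by (apply (@ex_derive_continuous R_AbsRing R_NormedModule); eexists; apply Fn_derive).
    pose proof (proj1 (filterlim_locally (Fn n) (Fn n 0)) Hc (mkposreal _ He2)) as H0.
    apply Filter_prod with (fun a => ball (Fn n 0) (eps / 2) (Fn n a)) (fun b => M < b).
    + apply filter_le_within. exact H0.
    + exists M. auto.
    + intros a b Ha Hb. specialize (HM b Hb). simpl in HM.
      unfold ball in *; simpl in *; unfold AbsRing_ball, abs, minus, plus, opp in *; simpl in *.
      unfold Fn in *. rewrite Pn_0, Ropp_0, exp_0 in Ha.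
      rewrite Rminus_0_r in HM.
      replace (- (exp (- b) * Pn n b) - - (exp (- a) * Pn n a) + - INR (fact n)) with
        ((- (exp (- b) * Pn n b)) + ((exp (- a) * Pn n a) + - (1 * INR (fact n)))) by ring.
      eapply Rle_lt_trans. apply Rabs_triang.
      rewrite Rabs_Ropp. 
      replace (pos eps) with (eps / 2 + eps / 2) by field.
      apply Rplus_lt_compat; auto.
      replace (exp (- a) * Pn n a + - (1 * INR (fact n))) with (- (- (exp (- a) * Pn n a) + - - (1 * INR (fact n)))) by ring.
      rewrite Rabs_Ropp. exact Ha.
Qed.


Lemma dterm_eq (alpha : R) (f g : R -> R) (x : R) :
  0 <= alpha <= 1 -> Smooth g -> (forall n y, 0 < y -> ex_derive_n f n (g y)) ->
  f (g 0) = 0 -> 0 < x ->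
  forall K, Dfrac_term alpha (fun y => f (g y)) x K =
            sum_f_R0 (fun m => rhs_term2 alpha f g x m (K - m)) K.
Proof.
  intros Ha Hg Hf Hfg0 Hx K.
  unfold Dfrac_term.
  rewrite (Derive_n_ext _ (fun y => f (g y))) by (intros; rewrite Hfg0; ring).
  rewrite (FdB f g Hg Hf K x Hx), Gamma_nat, scal_sum.
  apply sum_eq. intros m Hm.
  set (n := (K - m)%nat).
  assert (HK : K = (m + n)%nat) by (unfold n; lia).
  unfold rhs_term2. fold n. rewrite Gamma_nat.
  set (Fc := poch 1 n * poch (INR m - alpha) n
             / (poch (1 + INR m) n * poch (1 + INR m - alpha) n * INR (fact n))
             * (-1) ^ n * x ^ n).
  assert (Hin : sum_f_R0 (fun j => (-1) ^ j / INR (fact m) * Binomial.C m j * g x ^ j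
                                   * F22_term alpha m (dm_gpow g m j) x n) m
                = Fc * Bk g K m x).
  { unfold Bk. rewrite scal_sum. apply sum_eq. intros j Hj.
    unfold F22_term, dm_gpow. rewrite Derive_n_comp.
    replace (n + m)%nat with K by lia. unfold Fc. ring. }
  rewrite Hin.
  destruct (scalar_id alpha x m n Ha Hx) as [[Hm0 Hn1] | Hq].
  - assert (HB0 : Bk g K m x = 0).
    { subst m. unfold Bk. simpl sum_f_R0. simpl minus.
      destruct K as [|K']. lia.
      try rewrite (Derive_n_ext _ (fun _ => 1)) by (intros; reflexivity).
      rewrite Derive_n_const. ring. }
    rewrite HB0. unfold Rdiv. ring.
  - rewrite <- HK in Hq. unfold Qc in Hq. fold Fc in Hq.
    transitivity (Derive_n f m (g x) * Bk g K m x * Gamma (alpha + 1) *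
                  (sincpi (alpha - INR K) / INR (fact K) * Rpower x (INR K - alpha))).
    + unfold Rdiv. ring.
    + rewrite <- Hq. unfold Rdiv. ring.
Qed.

Lemma iss_plus (a b : nat -> R) (la lb : R) :
  is_series a la -> is_series b lb -> is_series (fun n => a n + b n) (la + lb).
Proof. intros; apply (@is_series_plus R_AbsRing R_NormedModule a b la lb); auto. Qed.

Lemma iss_ext (a b : nat -> R) (l : R) :
  (forall n, a n = b n) -> is_series a l -> is_series b l.
Proof. intros; apply (@is_series_ext R_AbsRing R_NormedModule a b l); auto. Qed.

Lemma fin_sum_series (u : nat -> nat -> R) (U : nat -> R) (n : nat) :
  (forall j, (j <= n)%nat -> is_series (u j) (U j)) ->
  is_series (fun k => sum_f_R0 (fun j => u j k) n) (sum_f_R0 U n).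
Proof.
  induction n as [|n IH]; intros H.
  - simpl. apply H. lia.
  - simpl. apply iss_plus. apply IH. intros; apply H; lia. apply H; lia.
Qed.

Lemma row_sum (alpha : R) (f g : R -> R) (x : R) (m : nat) :
  (forall j : nat, (j <= m)%nat ->
     ex_series (fun k => Rabs (F22_term alpha m (dm_gpow g m j) x k))) ->
  is_series (rhs_term2 alpha f g x m) (rhs_term alpha f g x m).
Proof.
  intros HF.
  set (c := sincpi (alpha - INR m) * Gamma (alpha + 1) / Gamma (INR m + 1)
            * Rpower x (INR m - alpha) * Derive_n f m (g x)).
  set (coef := fun j => (-1) ^ j / INR (fact m) * Binomial.C m j * g x ^ j).
  apply iss_ext with
    (fun k => sum_f_R0 (fun j => coef j * F22_term alpha m (dm_gpow g m j) x k) m * c).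
  { intros k. unfold rhs_term2, c, coef. unfold Rdiv. ring. }
  replace (rhs_term alpha f g x m) with
    (sum_f_R0 (fun j => coef j * F22op alpha m (dm_gpow g m j) x) m * c).
  2:{ unfold rhs_term, W, c, coef. unfold Rdiv. ring. }
  apply is_series_scal_r.
  apply fin_sum_series. intros j Hj.
  apply iss_ext with (fun k => F22_term alpha m (dm_gpow g m j) x k * coef j).
  { intros; ring. }
  replace (coef j * F22op alpha m (dm_gpow g m j) x) with (F22op alpha m (dm_gpow g m j) x * coef j) by ring.
  apply is_series_scal_r. unfold F22op. apply Series_correct. apply ex_series_Rabs. auto.
Qed.

Theorem mainTheorem2 (alpha : R) (f g : R -> R) (x : R) :
  0 <= alpha <= 1 ->
  (forall (n : nat) (y : R), 0 < y -> ex_derive_n g n y) ->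
  (forall (n : nat) (y : R), 0 < y -> ex_derive_n f n (g y)) ->
  f (g 0) = 0 ->
  0 < x ->
  ex_series (fun k => Rabs (Dfrac_term alpha (fun y => f (g y)) x k)) ->
  (forall m j : nat, (j <= m)%nat ->
     ex_series (fun k => Rabs (F22_term alpha m (dm_gpow g m j) x k))) ->
  ex_series (fun m => Rabs (rhs_term alpha f g x m)) ->
  (forall m : nat, ex_series (fun k => Rabs (rhs_term2 alpha f g x m k))) ->
  ex_series (fun m => Series (fun k => Rabs (rhs_term2 alpha f g x m k))) ->
  Dfrac alpha (fun y => f (g y)) x = Series (rhs_term alpha f g x).
Proof.
  intros Ha Hg Hf Hfg0 Hx Hd HF22 Hrhs Hrow Hcol.
  assert (Hgs : Smooth g) by (intros n k y _ Hy; apply Hg; auto).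
  pose proof (diag_sum (rhs_term2 alpha f g x) (rhs_term alpha f g x)
                (fun m => Series (fun k => Rabs (rhs_term2 alpha f g x m k)))
                (Series (rhs_term alpha f g x))
                (Series (fun m => Series (fun k => Rabs (rhs_term2 alpha f g x m k))))) as HD.
  unfold Dfrac. apply is_series_unique.
  apply iss_ext with (fun K => sum_f_R0 (fun m => rhs_term2 alpha f g x m (K - m)) K).
  { intros K. symmetry. apply dterm_eq; auto. }
  apply is_series_Reals. apply HD.
  - intros m. apply is_series_Reals. apply row_sum. auto.
  - intros m. apply is_series_Reals. apply Series_correct. auto.
  - apply is_series_Reals. apply Series_correct. auto.
  - apply is_series_Reals. apply Series_correct. apply ex_series_Rabs. auto.
Qed.
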